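(* Let $r,K,\mu$ satisfy Assumption 1, let $a_0:=\frac{\pi}{\sqrt{2(1-\mu)}}$ and $a>a_0$. Every positive solution $(w,m)\in C^0([-a,a])^2$ of the localized problem (P$_a$) with speed $c=0$ satisfies $$\max_{[-a_0,a_0]}(w+m)\ge \frac K2(1-\mu).$$
   Context: Assumption 1: $r\in(1,\infty)$, $\mu\in\left(0,\min\left(\frac r2,1-\frac1r,1-K,K\right)\right)$, $K\in\left(0,\min\left(1,\frac{r}{r-1}\left(1-\frac{\mu}{1-\mu}\right)\right)\right)$. $f_w(w,m):=w(1-(w+m))+\mu(m-w)$, $f_m(w,m):=rm\left(1-\frac{w+m}{K}\right)+\mu(w-m)$; $(w^*,m^* )$ is the unique solution in $(0,1)\times(0,K)$ of $f_w=f_m=0$. The localized problem (P$_a$) with speed $c$: $w,m\in C^0([-a,a])$ satisfy, in the weak sense on $(-a,a)$, $-cw'-w''=f_w(w,m)\chi_{w\ge0}\chi_{m\ge0}$, $-cm'-m''=f_m(w,m)\chi_{w\ge0}\chi_{m\ge0}$, with $w(-a)=w^*$, $m(-a)=m^*$, $w(a)=m(a)=0$. *)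

(* Defs.v *)
From Stdlib Require Import Reals Lra.
Open Scope R_scope.

Definition assumption1 (r K mu : R) : Prop :=
  1 < r /\
  0 < mu /\ mu < r / 2 /\ mu < 1 - 1 / r /\ mu < 1 - K /\ mu < K /\
  0 < K /\ K < 1 /\ K < r / (r - 1) * (1 - mu / (1 - mu)).

Definition f_w (mu w m : R) : R := w * (1 - (w + m)) + mu * (m - w).
Definition f_m (r K mu w m : R) : R :=
  r * m * (1 - (w + m) / K) + mu * (w - m).

Definition chi_nonneg (v : R) : R := if Rle_dec 0 v then 1 else 0.

Definition cont_on_closed (a : R) (u : R -> R) : Prop :=
  forall x, -a <= x <= a -> continue_in u (fun y => -a <= y <= a) x.

(* D is the sequence of successive derivatives of D 0 (so D 0 is C^infinity) *)
Definition deriv_seq (D : nat -> R -> R) : Prop :=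
  forall (n : nat) (x : R), derivable_pt_lim (D n) x (D (S n) x).

Definition compact_supp_in (a : R) (phi : R -> R) : Prop :=
  exists b, 0 <= b < a /\ forall x, b <= Rabs x -> phi x = 0.

(* u solves  -c u' - u'' = F  in the weak (distributional) sense on (-a,a):
   for every test function phi in C_c^infty((-a,a)),
   int_{-a}^{a} u (c phi' - phi'') = int_{-a}^{a} F phi. *)
Definition weak_sol (a c : R) (u F : R -> R) : Prop :=
  forall D : nat -> R -> R,
    deriv_seq D -> compact_supp_in a (D 0%nat) ->
    forall (Hi1 : Riemann_integrable
                    (fun x => u x * (c * D 1%nat x - D 2%nat x)) (-a) a)
           (Hi2 : Riemann_integrable (fun x => F x * D 0%nat x) (-a) a),
      RiemannInt Hi1 = RiemannInt Hi2.

Definition solves_Pa (r K mu a c wstar mstar : R) (w m : R -> R) : Prop :=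
  cont_on_closed a w /\ cont_on_closed a m /\
  weak_sol a c w
    (fun x => f_w mu (w x) (m x) * chi_nonneg (w x) * chi_nonneg (m x)) /\
  weak_sol a c m
    (fun x => f_m r K mu (w x) (m x) * chi_nonneg (w x) * chi_nonneg (m x)) /\
  w (-a) = wstar /\ m (-a) = mstar /\ w a = 0 /\ m a = 0.

(* Main.v *)
Require Import Defs.
From Stdlib Require Import Reals Lra Lia Psatz List Classical ClassicalEpsilon FunctionalExtensionality.
From Coquelicot Require Import Coquelicot.
Open Scope R_scope.

Lemma der_local (f g : R -> R) (x l d : R) : 0 < d ->
  (forall y, Rabs (y - x) < d -> f y = g y) ->
  derivable_pt_lim f x l -> derivable_pt_lim g x l.
Proof.
  intros Hd Heq H eps Heps. destruct (H eps Heps) as [del Hdel].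
  assert (H0 : 0 < Rmin del d) by (apply Rmin_glb_lt; [apply cond_pos|lra]).
  exists (mkposreal _ H0). intros h hn0 hlt. simpl in hlt.
  rewrite <- !Heq.
  - apply Hdel; auto. apply Rlt_le_trans with (1:=hlt); apply Rmin_l.
  - unfold Rminus; rewrite Rplus_opp_r, Rabs_R0; lra.
  - replace (x + h - x) with h by ring. apply Rlt_le_trans with (1:=hlt); apply Rmin_r.
Qed.

Fixpoint Cn (n:nat) (f:R->R) : Prop := match n with
 | O => True
 | S n => exists f', (forall x, derivable_pt_lim f x (f' x)) /\ Cn n f' end.

Lemma Cn_weak : forall n f, Cn (S n) f -> Cn n f.
Proof.
  induction n; simpl; auto. intros f [f' [H1 H2]]. exists f'; split; auto.
Qed.

Lemma Cn_ext : forall n f g, (forall x, f x = g x) -> Cn n f -> Cn n g.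
Proof.
  intros n f g H. replace g with f; auto. apply functional_extensionality; auto.
Qed.

Lemma Cn_const : forall n a, Cn n (fun _ => a).
Proof.
  induction n; simpl; auto. intros a. exists (fun _ => 0). split; auto.
  intros x. apply derivable_pt_lim_const.
Qed.

Lemma Cn_id : forall n, Cn n (fun x => x).
Proof.
  destruct n; simpl; auto. exists (fun _ => 1). split.
  - intros x. apply derivable_pt_lim_id.
  - apply Cn_const.
Qed.

Lemma Cn_plus : forall n f g, Cn n f -> Cn n g -> Cn n (fun x => f x + g x).
Proof.
  induction n; simpl; auto. intros f g [f' [Hf Cf]] [g' [Hg Cg]].
  exists (fun x => f' x + g' x). split; auto.
  intros x. apply (derivable_pt_lim_plus f g); auto.
Qed.

Lemma Cn_mult : forall n f g, Cn n f -> Cn n g -> Cn n (fun x => f x * g x).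
Proof.
  induction n; simpl; auto. intros f g Hf0 Hg0.
  destruct Hf0 as [f' [Hf Cf]]. destruct Hg0 as [g' [Hg Cg]].
  exists (fun x => f' x * g x + f x * g' x). split.
  - intros x. apply (derivable_pt_lim_mult f g); auto.
  - apply Cn_plus; apply IHn; auto; apply Cn_weak; simpl; eauto.
Qed.

Lemma Cn_comp : forall n f g, Cn n f -> Cn n g -> Cn n (fun x => g (f x)).
Proof.
  induction n; simpl; auto. intros f g Hf0 Hg0.
  destruct Hf0 as [f' [Hf Cf]] eqn:E1. destruct Hg0 as [g' [Hg Cg]] eqn:E2.
  exists (fun x => g' (f x) * f' x). split.
  - intros x. apply (derivable_pt_lim_comp f g); auto.
  - apply Cn_mult; auto. apply IHn; auto. apply Cn_weak; simpl; eauto.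
Qed.

Lemma Cn_cos_sin : forall n, Cn n cos /\ Cn n sin.
Proof.
  induction n; simpl; auto. destruct IHn as [Hc Hs]. split.
  - exists (fun x => - sin x). split.
    + apply derivable_pt_lim_cos.
    + apply Cn_mult with (f := fun _ => -1) (g := sin) in Hs; [|apply Cn_const].
      eapply Cn_ext; [|exact Hs]. intros; simpl; ring.
  - exists cos. split; auto. apply derivable_pt_lim_sin.
Qed.

Definition Smooth f := forall n, Cn n f.

Fixpoint IsDer (n:nat) (f g : R -> R) : Prop := match n with
 | O => g = f
 | S n => exists h, IsDer n f h /\ forall x, derivable_pt_lim h x (g x) end.

Lemma IsDer_unique : forall n f g1 g2, IsDer n f g1 -> IsDer n f g2 -> g1 = g2.
Proof.
  induction n; simpl; intros f g1 g2.
  - intros; subst; auto.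
  - intros [h1 [H1 D1]] [h2 [H2 D2]]. assert (h1 = h2) by eauto. subst.
    apply functional_extensionality; intros x. eapply uniqueness_limite; eauto.
Qed.

Lemma IsDer_shift : forall n f f' g, (forall x, derivable_pt_lim f x (f' x)) ->
  IsDer n f' g -> IsDer (S n) f g.
Proof.
  induction n; simpl; intros f f' g Hd H.
  - subst. exists f; auto.
  - destruct H as [h [H1 H2]]. exists h; split; auto. eapply IHn; eauto.
Qed.

Lemma Cn_IsDer : forall n f, Cn n f -> exists g, IsDer n f g.
Proof.
  induction n; simpl; intros f H.
  - exists f; auto.
  - destruct H as [f' [Hd C]]. destruct (IHn f' C) as [g Hg].
    exists g. eapply IsDer_shift; eauto.
Qed.

Lemma smooth_seq : forall f, Smooth f -> exists D : nat -> R -> R,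
  (forall n, IsDer n f (D n)) /\ (forall n x, derivable_pt_lim (D n) x (D (S n) x)).
Proof.
  intros f Hs.
  exists (fun n => proj1_sig (constructive_indefinite_description _ (Cn_IsDer n f (Hs n)))).
  assert (HD : forall n, IsDer n f (proj1_sig (constructive_indefinite_description _ (Cn_IsDer n f (Hs n))))).
  { intros n. exact (proj2_sig (constructive_indefinite_description _ (Cn_IsDer n f (Hs n)))). }
  split; auto. intros n x.
  destruct (HD (S n)) as [h [H1 H2]].
  assert (E := IsDer_unique n f _ _ H1 (HD n)). rewrite <- E. apply H2.
Qed.

Fixpoint peval (l:list R) (y:R) : R := match l with nil => 0 | a :: l' => a + y * peval l' y end.
Fixpoint padd (l1 l2 : list R) : list R := match l1, l2 with
  | nil, _ => l2 | _, nil => l1 | a::l1', b::l2' => (a+b) :: padd l1' l2' end.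
Fixpoint pder (l : list R) : list R := match l with nil => nil | a :: l' => padd l' (0 :: pder l') end.
Definition pscale (s:R) (l : list R) := map (fun a => s*a) l.

Lemma peval_padd : forall l1 l2 y, peval (padd l1 l2) y = peval l1 y + peval l2 y.
Proof. induction l1; destruct l2; simpl; intros; try ring. rewrite IHl1; ring. Qed.
Lemma peval_pscale : forall s l y, peval (pscale s l) y = s * peval l y.
Proof. induction l; simpl; intros; try ring. unfold pscale in IHl; rewrite IHl; ring. Qed.

Lemma peval_der : forall l y, derivable_pt_lim (peval l) y (peval (pder l) y).
Proof.
  induction l; simpl; intros y.
  - apply derivable_pt_lim_const.
  - rewrite peval_padd. simpl.
    replace (peval l y + (0 + y * peval (pder l) y)) with (0 + (1 * peval l y + y * peval (pder l) y)) by ring.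
    apply (derivable_pt_lim_plus (fct_cte a) (id * peval l)%F).
    + apply derivable_pt_lim_const.
    + apply (derivable_pt_lim_mult id (peval l)); auto. apply derivable_pt_lim_id.
Qed.

Definition dP (c:R) (l : list R) : list R := 0 :: 0 :: padd (pscale c l) (pscale (-1) (pder l)).

Definition EF (c:R) (l:list R) (v:R) : R :=
  if Rlt_dec 0 v then peval l (/ v) * exp (- (c * / v)) else 0.

Fixpoint psum (l:list R) : R := match l with nil => 0 | a :: l' => Rabs a + psum l' end.

Lemma psum_ge0 : forall l, 0 <= psum l.
Proof. induction l; simpl; [lra|]. pose proof (Rabs_pos a); lra. Qed.

Lemma peval_bound : forall l y, 1 <= y -> Rabs (peval l y) <= psum l * y ^ length l.
Proof.
  induction l; simpl; intros y Hy.
  - rewrite Rabs_R0; lra.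
  - specialize (IHl y Hy). pose proof (psum_ge0 l).
    assert (1 <= y ^ length l) by (apply pow_R1_Rle; lra).
    eapply Rle_trans; [apply Rabs_triang|]. rewrite Rabs_mult, (Rabs_right y) by lra.
    pose proof (Rabs_pos a). pose proof (Rabs_pos (peval l y)).
    assert (y * Rabs (peval l y) <= y * (psum l * y ^ length l)) by (apply Rmult_le_compat_l; lra).
    assert (1 <= y * y ^ length l) by nra. nra.
Qed.

Lemma exp_pow_nat : forall n x, exp (INR n * x) = exp x ^ n.
Proof.
  induction n; intros x; simpl. - rewrite Rmult_0_l, exp_0; auto.
  - rewrite <- IHn. rewrite <- exp_plus. f_equal. destruct n; simpl; ring.
Qed.

Lemma exp_lower : forall M x, (0 < M)%nat -> 0 <= x -> (x / INR M) ^ M <= exp x.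
Proof.
  intros M x HM Hx. assert (0 < INR M) by (apply lt_0_INR; auto).
  replace x with (INR M * (x / INR M)) at 2 by (field; lra).
  rewrite exp_pow_nat. apply pow_incr. split.
  - apply Rmult_le_pos; auto. left; apply Rinv_0_lt_compat; auto.
  - pose proof (exp_ineq1_le (x / INR M)); lra.
Qed.

Lemma EF_zero_nonpos : forall c l v, v <= 0 -> EF c l v = 0.
Proof. intros; unfold EF; destruct (Rlt_dec 0 v); auto; lra. Qed.

Lemma EF_pos : forall c l v, 0 < v -> EF c l v = peval l (/ v) * exp (- (c * / v)).
Proof. intros; unfold EF; destruct (Rlt_dec 0 v); auto; lra. Qed.

Lemma EF_bound : forall c l, 0 < c -> exists C, 0 <= C /\ forall h, 0 < h < 1 ->
  Rabs (EF c l h / h) <= C * h.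
Proof.
  intros c l Hc. set (N := length l). set (M := S (S N)).
  assert (HM : 0 < INR M) by (apply lt_0_INR; unfold M; lia).
  set (q := (c / INR M) ^ M).
  assert (Hq : 0 < q) by (apply pow_lt; apply Rdiv_lt_0_compat; auto).
  exists (psum l / q). split. { apply Rdiv_le_0_compat; auto; apply psum_ge0. }
  intros h [Hh0 Hh1]. rewrite EF_pos by auto.
  set (y := / h). assert (Hy : 1 < y). { unfold y. rewrite <- Rinv_1. apply Rinv_lt_contravar; lra. }
  assert (Hyh : y * h = 1) by (unfold y; field; lra).
  set (E := exp (c * y)).
  assert (HE : q * (y ^ N * y * y) <= E).
  { unfold E, q. replace (y ^ N * y * y) with (y ^ M) by (unfold M; simpl; ring).
    rewrite <- Rpow_mult_distr. replace (c / INR M * y) with (c * y / INR M) by (field; lra).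
    apply exp_lower; [unfold M; lia| nra]. }
  assert (HyN : 1 <= y ^ N) by (apply pow_R1_Rle; lra).
  assert (HB := peval_bound l y (Rlt_le _ _ Hy)). fold N in HB.
  assert (HS := psum_ge0 l).
  assert (HE0 : 0 < E) by (unfold E; apply exp_pos).
  rewrite exp_Ropp. fold E.
  replace (peval l y * / E / h) with (peval l y * y * / E) by (unfold y; field; split; lra).
  rewrite Rabs_mult, Rabs_mult, (Rabs_right y) by lra.
  rewrite (Rabs_right (/ E)) by (left; apply Rinv_0_lt_compat; auto).
  apply Rmult_le_reg_r with E; auto. rewrite Rmult_assoc, Rinv_l, Rmult_1_r by lra.
  assert (Hc1 : psum l / q * h * (q * (y ^ N * y * y)) = psum l * y ^ N * y).
  { replace (psum l / q * h * (q * (y ^ N * y * y))) with (psum l * y ^ N * y * (y * h) * (q / q)) by (field; lra).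
    rewrite Hyh. unfold Rdiv; rewrite Rinv_r by lra; ring. }
  assert (0 <= psum l / q * h) by (apply Rmult_le_pos; [apply Rdiv_le_0_compat|]; lra).
  assert (psum l / q * h * (q * (y ^ N * y * y)) <= psum l / q * h * E) by (apply Rmult_le_compat_l; auto).
  nra.
Qed.

Lemma EF_der0 : forall c l, 0 < c -> derivable_pt_lim (EF c l) 0 0.
Proof.
  intros c l Hc eps Heps. destruct (EF_bound c l Hc) as [C [HC HB]].
  assert (Hd : 0 < Rmin 1 (eps / (C + 1))) by (apply Rmin_glb_lt; [lra| apply Rdiv_lt_0_compat; lra]).
  exists (mkposreal _ Hd). intros h hn0 hlt. simpl in hlt.
  rewrite (EF_zero_nonpos c l 0) by lra. rewrite Rplus_0_l.
  assert (h1 : Rabs h < 1) by (eapply Rlt_le_trans; [exact hlt|apply Rmin_l]).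
  assert (h2 : Rabs h < eps / (C + 1)) by (eapply Rlt_le_trans; [exact hlt|apply Rmin_r]).
  destruct (Rle_dec h 0) as [Hn|Hp].
  - rewrite EF_zero_nonpos by lra. unfold Rminus. rewrite Rplus_opp_r. unfold Rdiv. rewrite Rmult_0_l, Rplus_opp_r, Rabs_R0. lra.
  - rewrite Rabs_right in h1, h2 by lra.
    replace ((EF c l h - 0) / h - 0) with (EF c l h / h) by (field; lra).
    eapply Rle_lt_trans; [apply HB; lra|].
    apply Rmult_lt_compat_r with (r := C + 1) in h2; [|lra].
    unfold Rdiv in h2. rewrite Rmult_assoc, Rinv_l, Rmult_1_r in h2 by lra. nra.
Qed.

Lemma EF_der : forall c l v, 0 < c -> derivable_pt_lim (EF c l) v (EF c (dP c l) v).
Proof.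
  intros c l v Hc. destruct (Rtotal_order v 0) as [Hn|[H0|Hp]].
  - rewrite EF_zero_nonpos by lra.
    apply der_local with (f := fun _ => 0) (d := - v); [lra| |apply derivable_pt_lim_const].
    intros y Hy. rewrite EF_zero_nonpos; auto. apply Rabs_def2 in Hy. lra.
  - subst. rewrite EF_zero_nonpos by lra. apply EF_der0; auto.
  - apply der_local with (f := fun y => peval l (/ y) * exp (- (c * / y))) (d := v); [lra| |].
    + intros y Hy. rewrite EF_pos; auto. apply Rabs_def2 in Hy. lra.
    + rewrite EF_pos by auto. unfold dP. simpl. rewrite peval_padd, !peval_pscale.
      apply is_derive_Reals.
      evar (D1 : R).
      assert (H1 : is_derive (fun y => peval l (/ y)) v D1).
      { apply (is_derive_comp (peval l) Rinv). apply is_derive_Reals, peval_der.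
        auto_derive; [lra|]. subst D1; reflexivity. }
      subst D1.
      eapply is_derive_ext; [intros; reflexivity|].
      evar (D2 : R).
      assert (H2 : is_derive (fun y => exp (- (c * / y))) v D2).
      { auto_derive; [lra|]. subst D2; reflexivity. }
      subst D2.
      pose proof (is_derive_mult _ _ _ _ _ H1 H2) as H3. simpl in H3.
      specialize (H3 Rmult_comm).
      match type of H3 with is_derive _ _ ?V => replace (_ * exp (- (c * / v))) with V end; [exact H3|].
      unfold scal, mult, plus; simpl. unfold mult; simpl. field. lra.
Qed.

Lemma EF_smooth : forall c, 0 < c -> forall n l, Cn n (EF c l).
Proof.
  intros c Hc n; induction n; simpl; auto. intros l. exists (EF c (dP c l)). split; auto.
  intros; apply EF_der; auto.
Qed.

Definition Hf c k x := cos (k * x) * EF c (1 :: nil) (cos (k * x)).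
Definition L1 c := 1 :: c :: nil.
Definition H1f c k x := EF c (L1 c) (cos (k * x)) * (- sin (k * x) * k).
Definition H2f c k x := EF c (dP c (L1 c)) (cos (k * x)) * (- sin (k * x) * k) * (- sin (k * x) * k)
   + EF c (L1 c) (cos (k * x)) * (- cos (k * x) * k * k).

Lemma Gder : forall c v, 0 < c -> derivable_pt_lim (fun v => v * EF c (1::nil) v) v (EF c (L1 c) v).
Proof.
  intros c v Hc.
  assert (H := derivable_pt_lim_mult id (EF c (1::nil)) v 1 _ (derivable_pt_lim_id v) (EF_der c (1::nil) v Hc)).
  replace (EF c (L1 c) v) with (1 * EF c (1 :: nil) v + id v * EF c (dP c (1 :: nil)) v). exact H.
  unfold id, L1. destruct (Rle_dec v 0).
  - rewrite !EF_zero_nonpos by lra. ring.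
  - rewrite !EF_pos by lra. unfold dP; simpl. field. lra.
Qed.

Lemma lin_der : forall k x, derivable_pt_lim (fun x => k * x) x k.
Proof.
  intros. assert (H := derivable_pt_lim_scal id k x 1 (derivable_pt_lim_id x)).
  rewrite Rmult_1_r in H. exact H.
Qed.

Lemma coslin_der : forall k x, derivable_pt_lim (fun x => cos (k * x)) x (- sin (k * x) * k).
Proof.
  intros. apply (derivable_pt_lim_comp (fun x => k * x) cos). apply lin_der. apply derivable_pt_lim_cos.
Qed.
Lemma sinlin_der : forall k x, derivable_pt_lim (fun x => sin (k * x)) x (cos (k * x) * k).
Proof.
  intros. apply (derivable_pt_lim_comp (fun x => k * x) sin). apply lin_der. apply derivable_pt_lim_sin.
Qed.

Lemma Hf_der1 : forall c k x, 0 < c -> derivable_pt_lim (Hf c k) x (H1f c k x).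
Proof.
  intros. unfold Hf, H1f.
  apply (derivable_pt_lim_comp (fun x => cos (k * x)) (fun v => v * EF c (1::nil) v)).
  apply coslin_der. apply Gder; auto.
Qed.

Lemma Hf_der2 : forall c k x, 0 < c -> derivable_pt_lim (H1f c k) x (H2f c k x).
Proof.
  intros. unfold H1f, H2f.
  apply (derivable_pt_lim_mult (fun x => EF c (L1 c) (cos (k * x))) (fun x => - sin (k * x) * k)).
  - apply (derivable_pt_lim_comp (fun x => cos (k * x)) (EF c (L1 c))). apply coslin_der. apply EF_der; auto.
  - replace (- cos (k * x) * k * k) with ((- (cos (k*x) * k)) * k) by ring.
    apply derivable_pt_lim_scal_right with (f := fun x => - sin (k * x)).
    apply (derivable_pt_lim_opp (fun x => sin (k * x))). apply sinlin_der.
Qed.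

Lemma Hf_smooth : forall c k, 0 < c -> Smooth (Hf c k).
Proof.
  intros c k Hc n. unfold Hf.
  apply Cn_comp with (f := fun x => cos (k * x)) (g := fun v => v * EF c (1::nil) v).
  - apply Cn_comp with (f := fun x => k * x) (g := cos). apply Cn_mult; [apply Cn_const|apply Cn_id].
    apply Cn_cos_sin.
  - apply Cn_mult; [apply Cn_id| apply EF_smooth; auto].
Qed.

Lemma Hf_seq : forall c k, 0 < c -> exists D : nat -> R -> R,
  D 0%nat = Hf c k /\ D 1%nat = H1f c k /\ D 2%nat = H2f c k /\
  (forall n x, derivable_pt_lim (D n) x (D (S n) x)).
Proof.
  intros c k Hc. destruct (smooth_seq _ (Hf_smooth c k Hc)) as [D [HI HD]].
  exists D. split; [|split; [|split]]; auto.
  - exact (HI 0%nat).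
  - apply (IsDer_unique 1 (Hf c k)); auto. simpl. exists (Hf c k); split; auto.
    intros; apply Hf_der1; auto.
  - apply (IsDer_unique 2 (Hf c k)); auto. simpl. exists (H1f c k); split; auto.
    + exists (Hf c k); split; auto. intros; apply Hf_der1; auto.
    + intros; apply Hf_der2; auto.
Qed.

Lemma zero_prop : forall (D : nat -> R -> R) lo hi,
  (forall n x, derivable_pt_lim (D n) x (D (S n) x)) ->
  (forall x, lo < x < hi -> D 0%nat x = 0) -> forall n x, lo < x < hi -> D n x = 0.
Proof.
  intros D lo hi HD H0 n. induction n; auto. intros x Hx.
  apply (uniqueness_limite (D n) x); auto.
  apply der_local with (f := fun _ => 0) (d := Rmin (x - lo) (hi - x)).
  - apply Rmin_glb_lt; lra.
  - intros y Hy. symmetry; apply IHn. apply Rabs_def2 in Hy.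
    pose proof (Rmin_l (x-lo) (hi-x)); pose proof (Rmin_r (x-lo) (hi-x)); lra.
  - apply derivable_pt_lim_const.
Qed.

Lemma cont_interior : forall a u x, (forall x, -a <= x <= a -> continue_in u (fun y => -a <= y <= a) x) ->
  -a < x < a -> continuity_pt u x.
Proof.
  intros a u x H Hx eps Heps. destruct (H x (conj (Rlt_le _ _ (proj1 Hx)) (Rlt_le _ _ (proj2 Hx))) eps Heps)
    as [alp [Halp Hf]].
  exists (Rmin alp (Rmin (x + a) (a - x))). split.
  - apply Rmin_glb_lt; auto. apply Rmin_glb_lt; lra.
  - intros y [[_ Hne] Hd]. apply Hf. simpl in *. unfold R_dist in *.
    pose proof (Rmin_l alp (Rmin (x + a) (a - x))). pose proof (Rmin_r alp (Rmin (x + a) (a - x))).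
    pose proof (Rmin_l (x + a) (a - x)). pose proof (Rmin_r (x + a) (a - x)).
    apply Rabs_def2 in Hd as [Hd1 Hd2].
    split; [split; [split; lra| auto]|]. apply Rabs_def1; lra.
Qed.

Lemma der_cont : forall f x l, derivable_pt_lim f x l -> continuity_pt f x.
Proof. intros. apply derivable_continuous_pt. exists l. exact H. Qed.

Lemma cp_mult : forall f g x, continuity_pt f x -> continuity_pt g x -> continuity_pt (fun y => f y * g y) x.
Proof. intros. apply (continuity_pt_mult f g); auto. Qed.
Lemma cp_plus : forall f g x, continuity_pt f x -> continuity_pt g x -> continuity_pt (fun y => f y + g y) x.
Proof. intros. apply (continuity_pt_plus f g); auto. Qed.
Lemma cp_minus : forall f g x, continuity_pt f x -> continuity_pt g x -> continuity_pt (fun y => f y - g y) x.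
Proof. intros. apply (continuity_pt_minus f g); auto. Qed.
Lemma cp_const : forall c x, continuity_pt (fun _ => c) x.
Proof. intros. apply continuity_pt_const. intros ? ?; auto. Qed.

Section Clip.
Variables (a0 k c : R) (D : nat -> R -> R).
Hypothesis Ha0 : 0 < a0.
Hypothesis Hk : k * a0 = PI / 2.
Hypothesis Hc : 0 < c.
Hypothesis HD0 : D 0%nat = Hf c k.
Hypothesis HD : forall n x, derivable_pt_lim (D n) x (D (S n) x).

Lemma k_pos : 0 < k.
Proof.
  destruct (Rlt_or_le 0 k) as [|Hle]; auto. pose proof PI_RGT_0.
  assert (k * a0 <= 0) by nra. lra.
Qed.

Lemma Dzero : forall n x, a0 < Rabs x < 3 * a0 -> D n x = 0.
Proof.
  pose proof k_pos as Hkp.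
  assert (Zp : forall n x, a0 < x < 3 * a0 -> D n x = 0).
  { apply zero_prop; auto. intros x Hx. rewrite HD0. unfold Hf.
    rewrite EF_zero_nonpos. ring. left. apply cos_lt_0; nra. }
  assert (Zn : forall n x, -(3 * a0) < x < - a0 -> D n x = 0).
  { apply zero_prop; auto. intros x Hx. rewrite HD0. unfold Hf.
    rewrite EF_zero_nonpos. ring. left. replace (k * x) with (- (k * - x)) by ring. rewrite cos_neg. apply cos_lt_0; nra. }
  intros n x Hx. destruct (Rle_or_lt 0 x).
  - rewrite Rabs_right in Hx by lra. apply Zp; lra.
  - rewrite Rabs_left in Hx by lra. apply Zn; lra.
Qed.

Definition Dc (n : nat) (x : R) : R := if Rle_dec (Rabs x) (2 * a0) then D n x else 0.

Lemma Dc_out : forall n x, a0 < Rabs x -> Dc n x = 0.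
Proof.
  intros n x H. unfold Dc. destruct (Rle_dec (Rabs x) (2 * a0)); auto. apply Dzero; lra.
Qed.

Lemma Dc_in : forall n x, Rabs x <= 2 * a0 -> Dc n x = D n x.
Proof. intros n x H. unfold Dc. destruct (Rle_dec (Rabs x) (2 * a0)); auto; lra. Qed.

Lemma Dc_seq : forall n x, derivable_pt_lim (Dc n) x (Dc (S n) x).
Proof.
  intros n x. destruct (Rlt_or_le (Rabs x) (2 * a0)) as [Hl|Hg].
  - rewrite Dc_in by lra. apply der_local with (f := D n) (d := 2 * a0 - Rabs x); auto; [lra|].
    intros y Hy. rewrite Dc_in; auto. pose proof (Rabs_triang_inv y x). lra.
  - rewrite Dc_out by lra. apply der_local with (f := fun _ => 0) (d := Rabs x - a0); [lra| |apply derivable_pt_lim_const].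
    intros y Hy. rewrite Dc_out; auto. pose proof (Rabs_triang_inv x y). rewrite Rabs_minus_sym in Hy. lra.
Qed.

Lemma Dc0_edge : forall x, a0 <= Rabs x -> Dc 0 x = 0.
Proof.
  intros x H. destruct (Rlt_or_le a0 (Rabs x)). apply Dc_out; auto.
  rewrite Dc_in by lra. rewrite HD0. unfold Hf.
  assert (Hx : Rabs x = a0) by lra.
  assert (Hc0 : cos (k * x) = 0).
  { destruct (Rle_or_lt 0 x) as [Hp|Hn].
    - rewrite Rabs_right in Hx by lra. rewrite Hx, Hk. apply cos_PI2.
    - rewrite Rabs_left in Hx by lra. replace x with (- a0) by lra. replace (k * - a0) with (- (k * a0)) by ring.
      rewrite cos_neg, Hk. apply cos_PI2. }
  rewrite Hc0. ring.
Qed.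

Lemma cos_in : forall x, Rabs x < a0 -> 0 < cos (k * x) <= 1.
Proof.
  pose proof k_pos. intros x Hx. split; [|apply COS_bound]. apply Rabs_def2 in Hx.
  apply cos_gt_0; nra.
Qed.

End Clip.

Lemma key_ineq : forall v k2 lam sg, 0 < v <= 1 -> 0 < k2 < 1/2 -> 0 < sg <= 1/4 -> 2*sg <= lam - k2 ->
  k2 * (v^4 + 2*sg^3 * v^3 - (2*sg^3)^2 * (1 - v^2)) < lam * v^4.
Proof.
  intros v k2 lam sg Hv Hk Hs Hl.
  assert (Hv4 : 0 < v^4) by (apply pow_lt; lra).
  destruct (Rle_or_lt sg v) as [Hge|Hlt].
  - assert (H1 : 2*sg^3*v^3 <= 2*sg^2 * v^4).
    { replace (2*sg^2*v^4) with (2*sg^2*v^3*v) by ring. replace (2*sg^3*v^3) with (2*sg^2*v^3*sg) by ring.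
      apply Rmult_le_compat_l; [|lra]. assert (0 < v^3) by (apply pow_lt; lra). nra. }
    assert (H2 : 0 <= (2*sg^3)^2 * (1 - v^2)).
    { apply Rmult_le_pos. apply pow2_ge_0. nra. }
    assert (H3 : 2*sg^2 <= (lam - k2)/4) by nra.
    assert (H4 : 2*sg^2*v^4 <= (lam-k2)/4 * v^4) by (apply Rmult_le_compat_r; lra).
    assert (H5 : 0 <= (lam - k2)) by lra.
    assert (H6 : k2 * (2*sg^2*v^4) <= (1/2) * ((lam-k2)/4 * v^4)).
    { apply Rmult_le_compat; try lra. apply Rmult_le_pos; [|lra]. nra. }
    assert (0 < (lam - k2) * v^4) by (apply Rmult_lt_0_compat; lra).
    nra.
  - assert (Hv3 : v^3 < sg^3) by (simpl; assert (v*v < sg*sg) by nra; nra).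
    assert (Hs3 : 0 < sg^3) by (apply pow_lt; lra).
    assert (Hsg2 : sg^2 <= 1/16) by nra.
    assert (Hvv : v^2 < 1/16) by (simpl; nra).
    assert (H1 : sg^3 < 2*sg^3*(1 - v^2)).
    { assert (1 < 2*(1 - v^2)) by lra. replace (2*sg^3*(1-v^2)) with (sg^3 * (2*(1-v^2))) by ring. nra. }
    assert (H2 : 2*sg^3 * v^3 < (2*sg^3)^2 * (1 - v^2)).
    { replace ((2*sg^3)^2 * (1 - v^2)) with (2*sg^3 * (2*sg^3*(1-v^2))) by ring.
      apply Rmult_lt_compat_l; lra. }
    assert (H3 : k2 * (v ^ 4 + 2 * sg ^ 3 * v ^ 3 - (2 * sg ^ 3) ^ 2 * (1 - v ^ 2)) < k2 * v^4).
    { apply Rmult_lt_compat_l; lra. }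
    assert (k2 * v^4 < lam * v^4) by (apply Rmult_lt_compat_r; lra).
    lra.
Qed.

Lemma pointwise : forall a0 k c sg lam x, 0 < a0 -> k * a0 = PI / 2 -> c = 2 * sg^3 ->
  0 < k^2 < 1/2 -> 0 < sg <= 1/4 -> 2*sg <= lam - k^2 -> Rabs x < a0 ->
  0 < Hf c k x /\ - H2f c k x < lam * Hf c k x.
Proof.
  intros a0 k c sg lam x Ha0 Hk Hc Hk2 Hs Hl Hx.
  destruct (cos_in a0 k Ha0 Hk x Hx) as [Hv0 Hv1].
  assert (Hcp : 0 < c) by (subst; apply Rmult_lt_0_compat; [lra| apply pow_lt; lra]).
  unfold Hf, H2f, L1. set (v := cos (k * x)) in *.
  rewrite !EF_pos by lra. unfold dP. simpl.
  set (e := exp (- (c * / v))). assert (He : 0 < e) by apply exp_pos.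
  split. { apply Rmult_lt_0_compat; auto. rewrite Rmult_0_r, Rplus_0_r, Rmult_1_l. auto. }
  assert (Hsin : sin (k * x) * sin (k * x) = 1 - v * v).
  { pose proof (sin2 (k * x)). unfold Rsqr in H. fold v in H. lra. }
  assert (HK := key_ineq v (k^2) lam sg (conj Hv0 Hv1) Hk2 Hs Hl).
  rewrite <- Hc in HK.
  assert (Hv3 : 0 < v^3) by (apply pow_lt; lra).
  set (s := sin (k * x)) in *.
  match goal with |- ?L < ?R => assert (EL : L = e / v^3 * (k ^ 2 * (v ^ 4 + c * v ^ 3 - c ^ 2 * (1 - v ^ 2))));
    [|assert (ER : R = e / v^3 * (lam * v^4))] end.
  { transitivity (e * k * k * (- (c*c) / (v*v*v) * (s * s) + (1 + c / v) * v)). field; lra.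
    rewrite Hsin. field. lra. }
  { field. lra. }
  rewrite EL, ER. apply Rmult_lt_compat_l; auto. apply Rdiv_lt_0_compat; auto.
Qed.

Lemma zero_int : forall f lo hi, lo <= hi -> (forall x, lo <= x <= hi -> f x = 0) -> Riemann_integrable f lo hi.
Proof.
  intros f lo hi Hle H. apply Riemann_integrable_ext with (f := fct_cte 0); [|apply RiemannInt_P14].
  intros x Hx. rewrite Rmin_left, Rmax_right in Hx by lra. unfold fct_cte. symmetry; auto.
Qed.

Lemma RI_ge_const : forall f lo hi c (pr : Riemann_integrable f lo hi), lo <= hi ->
  (forall x, lo < x < hi -> c <= f x) -> c * (hi - lo) <= RiemannInt pr.
Proof.
  intros f lo hi c pr Hle H. rewrite <- (RiemannInt_P15 (RiemannInt_P14 lo hi c)).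
  apply RiemannInt_P19; auto.
Qed.

Lemma cont_int : forall f lo hi, lo <= hi -> (forall x, lo <= x <= hi -> continuity_pt f x) -> Riemann_integrable f lo hi.
Proof. intros. apply continuity_implies_RiemannInt; auto. Qed.

Lemma cp_opp : forall f x, continuity_pt f x -> continuity_pt (fun y => - f y) x.
Proof. intros. apply (continuity_pt_opp f); auto. Qed.

Ltac cpt := repeat first [ assumption | apply cp_opp | apply cp_minus | apply cp_plus | apply cp_minus | apply cp_mult | apply cp_const | assumption ].

Theorem mainTheorem7 (r K mu wstar mstar a : R) (w m : R -> R) :
  assumption1 r K mu ->
  0 < wstar < 1 -> 0 < mstar < K ->
  f_w mu wstar mstar = 0 -> f_m r K mu wstar mstar = 0 ->
  PI / sqrt (2 * (1 - mu)) < a ->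
  solves_Pa r K mu a 0 wstar mstar w m ->
  (forall x, -a < x < a -> 0 < w x /\ 0 < m x) ->
  exists x, - (PI / sqrt (2 * (1 - mu))) <= x <= PI / sqrt (2 * (1 - mu)) /\
    K / 2 * (1 - mu) <= w x + m x.
Proof.
  intros HA Hws Hms Hfw Hfm Ha Hsol Hpos.
  destruct HA as [Hr [Hmu0 [Hmu1 [Hmu2 [Hmu3 [Hmu4 [HK0 [HK1 HK2]]]]]]]].
  set (a0 := PI / sqrt (2 * (1 - mu))) in *.
  destruct (classic (exists x, -a0 <= x <= a0 /\ K/2*(1-mu) <= w x + m x)) as [|Hno]; [assumption|exfalso].
  assert (Hsm : forall x, -a0 <= x <= a0 -> w x + m x < K/2*(1-mu)).
  { intros x Hx. destruct (Rlt_or_le (w x + m x) (K/2*(1-mu))); auto. exfalso; apply Hno; eauto. }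
  pose proof PI_RGT_0 as HPI.
  assert (Hsq : 0 < sqrt (2*(1-mu))) by (apply sqrt_lt_R0; lra).
  assert (Ha0 : 0 < a0) by (unfold a0; apply Rdiv_lt_0_compat; auto).
  set (k := PI / (2 * a0)).
  assert (Hk : k * a0 = PI/2) by (unfold k; field; lra).
  assert (Hk2 : k^2 = (1-mu)/2).
  { unfold k, a0. replace ((PI / (2 * (PI / sqrt (2 * (1 - mu))))) ^ 2) with (sqrt (2*(1-mu)) * sqrt (2*(1-mu)) / 4) by (field; lra).
    rewrite sqrt_sqrt by lra. field. }
  set (lam := r * (1 + mu) / 2 - mu).
  assert (Hdel : 0 < lam - k^2) by (rewrite Hk2; unfold lam; nra).
  set (sg := Rmin (lam - k^2) (1/2) / 2).
  assert (Hsg : 0 < sg <= 1/4).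
  { unfold sg. pose proof (Rmin_r (lam - k^2) (1/2)). split; [|lra]. apply Rdiv_lt_0_compat; [|lra]. apply Rmin_glb_lt; lra. }
  assert (Hsg2 : 2 * sg <= lam - k^2) by (unfold sg; pose proof (Rmin_l (lam - k^2) (1/2)); lra).
  set (c := 2 * sg ^ 3).
  assert (Hcp : 0 < c) by (unfold c; apply Rmult_lt_0_compat; [lra|apply pow_lt; lra]).
  destruct (Hf_seq c k Hcp) as [D [HD0 [HD1 [HD2 HDs]]]].
  set (Dc' := Dc a0 D).
  assert (Hout : forall n x, a0 < Rabs x -> Dc' n x = 0) by (intros; apply (Dc_out a0 k c D Ha0 Hk HD0 HDs); auto).
  assert (Hseq : deriv_seq Dc') by (intros n x; apply (Dc_seq a0 k c D Ha0 Hk HD0 HDs)).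
  assert (Hsupp : compact_supp_in a (Dc' 0%nat)).
  { exists a0. split; [lra|]. intros x Hx. apply (Dc0_edge a0 k c D Ha0 Hk HD0 HDs); auto. }
  assert (Hpt : forall x, Rabs x < a0 -> 0 < Dc' 0%nat x /\ - Dc' 2%nat x < lam * Dc' 0%nat x).
  { intros x Hx. unfold Dc'. rewrite !Dc_in by lra. rewrite HD0, HD2.
    apply (pointwise a0 k c sg lam x Ha0 Hk eq_refl); auto. rewrite Hk2; lra. }
  destruct Hsol as [Hcw [Hcm [_ [Hweak _]]]].
  assert (cm : forall x, -a < x < a -> continuity_pt m x) by (intros; eapply cont_interior; eauto).
  assert (cw : forall x, -a < x < a -> continuity_pt w x) by (intros; eapply cont_interior; eauto).
  assert (cD : forall n x, continuity_pt (Dc' n) x) by (intros; eapply der_cont; apply Hseq).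
  assert (chi1 : forall v, 0 < v -> chi_nonneg v = 1) by (intros; unfold chi_nonneg; destruct (Rle_dec 0 v); lra).
  assert (cFm : forall x, -a < x < a -> continuity_pt (fun y => f_m r K mu (w y) (m y)) x).
  { intros x Hx. unfold f_m, Rdiv. specialize (cm x Hx). specialize (cw x Hx). cpt. }
  set (b := (a0 + a) / 2).
  assert (Hb : a0 < b < a) by (unfold b; lra).
  assert (Hzero : forall n x, -a <= x <= -b \/ b <= x <= a -> Dc' n x = 0).
  { intros n x Hx. apply Hout. destruct Hx; [rewrite Rabs_left by lra| rewrite Rabs_right by lra]; lra. }
  assert (Hi1 : Riemann_integrable (fun x => m x * (0 * Dc' 1%nat x - Dc' 2%nat x)) (-a) a).
  { apply RiemannInt_P24 with (-b); [apply zero_int; [lra|] | apply RiemannInt_P24 with b; [|apply zero_int; [lra|]]].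
    - intros x Hx. rewrite !(Hzero _ x) by lra. ring.
    - apply cont_int; [lra|]. intros x Hx. assert (-a < x < a) by lra. specialize (cm x H).
      pose proof (cD 1%nat x). pose proof (cD 2%nat x). cpt.
    - intros x Hx. rewrite !(Hzero _ x) by lra. ring. }
  assert (Hi2 : Riemann_integrable (fun x => (fun x => f_m r K mu (w x) (m x) * chi_nonneg (w x) * chi_nonneg (m x)) x * Dc' 0%nat x) (-a) a).
  { apply RiemannInt_P24 with (-b); [apply zero_int; [lra|] | apply RiemannInt_P24 with b; [|apply zero_int; [lra|]]].
    - intros x Hx. rewrite !(Hzero _ x) by lra. ring.
    - apply Riemann_integrable_ext with (f := fun x => f_m r K mu (w x) (m x) * Dc' 0%nat x).
      + intros x Hx. rewrite Rmin_left, Rmax_right in Hx by lra. destruct (Hpos x) as [Hw Hm]; [lra|].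
        rewrite !chi1 by auto. ring.
      + apply cont_int; [lra|]. intros x Hx. assert (-a < x < a) by lra.
        specialize (cFm x H). pose proof (cD 0%nat x). cpt.
    - intros x Hx. rewrite !(Hzero _ x) by lra. ring. }
  assert (Hw := Hweak Dc' Hseq Hsupp Hi1 Hi2).
  set (F := fun x => f_m r K mu (w x) (m x) * chi_nonneg (w x) * chi_nonneg (m x)) in *.
  pose (Hh := RiemannInt_P10 (-1) Hi2 Hi1).
  assert (HI0 : RiemannInt Hh = 0).
  { unfold Hh. rewrite (RiemannInt_P13 Hi2 Hi1). rewrite Hw. ring. }
  set (h := fun x => F x * Dc' 0%nat x + -1 * (m x * (0 * Dc' 1%nat x - Dc' 2%nat x))) in *.
  assert (HF : forall x, Rabs x < a0 -> lam * m x <= F x).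
  { intros x Hx. apply Rabs_def2 in Hx. destruct (Hpos x) as [Hwx Hmx]; [lra|].
    unfold F. rewrite !chi1 by auto. rewrite !Rmult_1_r. unfold f_m.
    assert (Hs := Hsm x (conj (Rlt_le _ _ (proj2 Hx)) (Rlt_le _ _ (proj1 Hx)))).
    set (t := (w x + m x) / K).
    assert (Ht : t < (1 - mu) / 2).
    { apply Rmult_lt_reg_r with K; auto. unfold t. replace ((w x + m x) / K * K) with (w x + m x) by (field; lra). lra. }
    unfold lam. assert (0 < r * m x) by nra. nra. }
  assert (Hh1 : Riemann_integrable h (-a) (-a0)) by (apply RiemannInt_P22 with a; [exact Hh|lra]).
  assert (Hh23 : Riemann_integrable h (-a0) a) by (apply RiemannInt_P23 with (-a); [exact Hh|lra]).
  assert (Hh2 : Riemann_integrable h (-a0) a0) by (apply RiemannInt_P22 with a; [exact Hh23|lra]).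
  assert (Hh3 : Riemann_integrable h a0 a) by (apply RiemannInt_P23 with (-a0); [exact Hh23|lra]).
  assert (E1 := RiemannInt_P26 Hh1 Hh23 Hh).
  assert (E2 := RiemannInt_P26 Hh2 Hh3 Hh23).
  assert (hzero : forall x, a0 < Rabs x -> h x = 0).
  { intros x Hx. unfold h. rewrite !Hout by auto. ring. }
  assert (I1 : 0 <= RiemannInt Hh1).
  { replace 0 with (0 * (-a0 - -a)) by ring. apply RI_ge_const; [lra|].
    intros x Hx. rewrite hzero; [lra|]. rewrite Rabs_left by lra. lra. }
  assert (I3 : 0 <= RiemannInt Hh3).
  { replace 0 with (0 * (a - a0)) by ring. apply RI_ge_const; [lra|].
    intros x Hx. rewrite hzero; [lra|]. rewrite Rabs_right by lra. lra. }
  set (h2 := fun x => m x * (lam * Dc' 0%nat x + Dc' 2%nat x)).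
  assert (ch2 : forall x, -a < x < a -> continuity_pt h2 x).
  { intros x Hx. unfold h2. specialize (cm x Hx). pose proof (cD 0%nat x). pose proof (cD 2%nat x). cpt. }
  assert (Hq : Riemann_integrable h2 (-a0) a0).
  { apply cont_int; [lra|]. intros; apply ch2; lra. }
  assert (I2a : RiemannInt Hq <= RiemannInt Hh2).
  { apply RiemannInt_P19; [lra|]. intros x Hx. assert (Hax : Rabs x < a0) by (apply Rabs_def1; lra).
    destruct (Hpt x Hax) as [P0 P2]. specialize (HF x Hax).
    unfold h2, h. assert (0 <= (F x - lam * m x) * Dc' 0%nat x) by (apply Rmult_le_pos; lra). nra. }
  assert (h2pos : forall x, Rabs x < a0 -> 0 < h2 x).
  { intros x Hx. destruct (Hpt x Hx) as [P0 P2]. apply Rabs_def2 in Hx. destruct (Hpos x) as [_ Hmx]; [lra|].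
    unfold h2. apply Rmult_lt_0_compat; lra. }
  assert (I2b : 0 < RiemannInt Hq).
  { assert (H0 : 0 < h2 0) by (apply h2pos; rewrite Rabs_R0; lra).
    destruct (ch2 0 ltac:(lra) (h2 0 / 2) ltac:(lra)) as [alp [Halp Hcont]].
    set (d := Rmin alp a0 / 2).
    assert (Hd : 0 < d < a0 /\ d < alp).
    { unfold d. pose proof (Rmin_l alp a0). pose proof (Rmin_r alp a0).
      assert (0 < Rmin alp a0) by (apply Rmin_glb_lt; lra). lra. }
    assert (Hnear : forall y, -d < y < d -> h2 0 / 2 <= h2 y).
    { intros y Hy. destruct (Req_dec y 0) as [->|Hy0]; [lra|].
      assert (Hyd : R_dist (h2 y) (h2 0) < h2 0 / 2).
      { apply (Hcont y). split. split; [exact I| auto]. simpl. unfold R_dist.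
        rewrite Rminus_0_r. apply Rabs_def1; lra. }
      unfold R_dist in Hyd. apply Rabs_def2 in Hyd. lra. }
    assert (Q1 : Riemann_integrable h2 (-a0) (-d)) by (apply RiemannInt_P22 with a0; [exact Hq|lra]).
    assert (Q23 : Riemann_integrable h2 (-d) a0) by (apply RiemannInt_P23 with (-a0); [exact Hq|lra]).
    assert (Q2 : Riemann_integrable h2 (-d) d) by (apply RiemannInt_P22 with a0; [exact Q23|lra]).
    assert (Q3 : Riemann_integrable h2 d a0) by (apply RiemannInt_P23 with (-d); [exact Q23|lra]).
    assert (F1 := RiemannInt_P26 Q1 Q23 Hq).
    assert (F2 := RiemannInt_P26 Q2 Q3 Q23).
    assert (J1 : 0 <= RiemannInt Q1).
    { replace 0 with (0 * (-d - -a0)) by ring. apply RI_ge_const; [lra|].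
      intros x Hx. left. apply h2pos. apply Rabs_def1; lra. }
    assert (J3 : 0 <= RiemannInt Q3).
    { replace 0 with (0 * (a0 - d)) by ring. apply RI_ge_const; [lra|].
      intros x Hx. left. apply h2pos. apply Rabs_def1; lra. }
    assert (J2 : h2 0 / 2 * (d - - d) <= RiemannInt Q2).
    { apply RI_ge_const; [lra|]. intros x Hx. apply Hnear; lra. }
    assert (0 < h2 0 / 2 * (d - - d)) by (apply Rmult_lt_0_compat; lra).
    lra. }
  lra.
Qed.
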